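(* Let $R$ and $S$ be finite fields. If $\Gamma(Tr(R))\cong\Gamma(Tr(S))$ as graphs, then $R\cong S$.
   Context: For a noncommutative ring $A$ with identity and center $Z(A)$, the commuting graph $\Gamma(A)$ is the simple graph with vertex set $A\setminus Z(A)$, in which two distinct vertices $a,b$ are adjacent iff $ab=ba$. $Tr(R)$ denotes the ring of all $2\times 2$ upper triangular matrices over $R$. *)

(* Defs.v *)
From HB Require Import structures.
From mathcomp Require Import all_boot all_order all_algebra.
Set Implicit Arguments. Unset Strict Implicit. Unset Printing Implicit Defensive.
Import GRing.Theory.
Local Open Scope ring_scope.

(* Tr(R): the 2x2 upper triangular matrices over R, as a subset of 'M[R]_2
   (closed under +, *, containing 1: a subring). *)
Definition upper2 (R : finFieldType) (A : 'M[R]_2) : bool :=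
  A ord_max ord0 == 0.

Definition tr_central (R : finFieldType) (A : 'M[R]_2) : bool :=
  upper2 A && [forall B : 'M[R]_2, upper2 B ==> (A *m B == B *m A)].

Definition trVert (R : finFieldType) :=
  {A : 'M[R]_2 | upper2 A && ~~ tr_central A}.

Definition trAdj (R : finFieldType) (a b : trVert R) : bool :=
  (a != b) && (val a *m val b == val b *m val a).

Definition comm_graph_iso (R S : finFieldType) : Prop :=
  exists f : trVert R -> trVert S,
    bijective f /\ forall a b, trAdj (f a) (f b) = trAdj a b.

(* Main.v *)
Require Import Defs.
From HB Require Import structures.
From mathcomp Require Import all_boot all_order all_algebra.
From mathcomp Require Import all_fingroup all_solvable all_field.
From mathcomp Require Import zify.
Set Implicit Arguments. Unset Strict Implicit. Unset Printing Implicit Defensive.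
Import GRing.Theory.
Local Open Scope ring_scope.

Lemma fin_field_iso (R S : finFieldType) : #|R| = #|S| ->
  exists f : {rmorphism R -> S}, bijective f.
Proof.
move=> cardRS.
have [p pp pR] := finPcharP R.
have pS : p \in [pchar S].
  apply: (@card_finPcharP _ p (logn p #|R|)) => //.
  by rewrite -cardRS; exact: (card_pprimeChar pR).
pose R' := pPrimeCharType pR.
pose S' := pPrimeCharType pS.
have [u defU] := cyclicP (field_unit_group_cyclic [set: {unit R}]%G).
pose a : R' := FinRing.uval u.
have hE (A : algType 'F_p) (c : A) (g : {poly 'F_p}) :
    horner_alg c g = (map_poly (in_alg A) g).[c] by [].
have surj (x : R') : exists g : {poly 'F_p}, horner_alg a g = x.
  have [->|nz] := eqVneq x 0; first by exists 0; rewrite rmorph0.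
  have : finField_unit nz \in <[u]>%g by rewrite -defU inE.
  case/cycleP=> k hk; exists 'X^k.
  rewrite rmorphXn /= horner_algX /a.
  have -> : x = FinRing.uval (finField_unit nz) by [].
  by rewrite hk FinRing.val_unitX.
have /polyOver1P[m0 Dm] := minPolyOver 1 a.
have kerR g : horner_alg a g = 0 -> (m0 %| g)%R.
  rewrite hE => /eqP rg.
  have := minPoly_dvdp (_ : map_poly (in_alg R') g \is a polyOver 1%VS) rg.
  by rewrite Dm dvdp_map; apply; apply/polyOver1P; exists g.
have rm0 : horner_alg a m0 = 0 by apply/eqP; rewrite hE -Dm; exact: root_minPoly.
have szm : (1 < size m0)%N.
  rewrite ltnNge; apply/negP => /size1_polyC Em.
  move: rm0; rewrite Em horner_algC => /eqP; rewrite scaler_eq0 oner_eq0 orbF => /eqP c0.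
  have := monic_neq0 (monic_minPoly 1 a).
  by rewrite Dm Em c0 map_polyC /= scale0r eqxx.
have dX : (m0 %| 'X^#|R| - 'X)%R.
  apply: kerR; rewrite rmorphB rmorphXn /= horner_algX.
  by rewrite (expf_card (a : R')) subrr.
have : (map_poly (in_alg S') m0 %| \prod_(y : S') ('X - y%:P))%R.
  rewrite -finField_genPoly.
  have -> : 'X^#|S'| - 'X = map_poly (in_alg S') ('X^#|R| - 'X).
    by rewrite rmorphB rmorphXn /= map_polyX cardRS.
  by rewrite dvdp_map.
case/dvdp_prod_XsubC => ms Hms.
have [b rb] : exists b : S', horner_alg b m0 = 0.
  move: Hms; case: (mask ms _) => [|y ys].
    rewrite big_nil => /eqp_size; rewrite size_polyC oner_eq0 /=.
    by rewrite size_map_poly => e; rewrite e in szm.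
  move=> /eqp_root rt; exists y; apply/eqP; rewrite hE.
  by rewrite -/(root _ y) rt big_cons rootM root_XsubC eqxx.
have kerS g : horner_alg a g = 0 -> horner_alg b g = 0.
  by move/kerR/divpK <-; rewrite rmorphM /= rb mulr0.
have surjb (x : R') : exists g, horner_alg a g == x.
  by have [g <-] := surj x; exists g.
pose pre (x : R') := xchoose (surjb x).
pose f (x : R) : S := horner_alg b (pre x).
have fE g : f (horner_alg a g) = horner_alg b g.
  apply/eqP; rewrite -subr_eq0 /f -(rmorphB (horner_alg b)); apply/eqP/kerS.
  by rewrite rmorphB /= (eqP (xchooseP (surjb _))) subrr.
have fS (x : R) : exists g, x = horner_alg a g.
  by have [g <-] := surj x; exists g.
have fN : nmod_morphism f.
  split.
    have -> : (0 : R) = horner_alg a 0 by rewrite rmorph0.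
    by rewrite fE; exact: (rmorph0 (horner_alg b)).
  move=> x y; have [gx ->] := fS x; have [gy ->] := fS y.
  have -> : (horner_alg a gx + horner_alg a gy : R) = horner_alg a (gx + gy).
    by rewrite rmorphD.
  by rewrite !fE; exact: (rmorphD (horner_alg b)).
have fM : monoid_morphism f.
  split.
    have -> : (1 : R) = horner_alg a 1 by rewrite rmorph1.
    by rewrite fE; exact: (rmorph1 (horner_alg b)).
  move=> x y; have [gx ->] := fS x; have [gy ->] := fS y.
  have -> : (horner_alg a gx * horner_alg a gy : R) = horner_alg a (gx * gy).
    by rewrite rmorphM.
  by rewrite !fE; exact: (rmorphM (horner_alg b)).
pose faM := GRing.isNmodMorphism.Build _ _ f fN.
pose fmM := GRing.isMonoidMorphism.Build _ _ f fM.
pose F : {rmorphism R -> S} := HB.pack f faM fmM.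
exists F; apply: inj_card_bij; first exact: fmorph_inj.
by rewrite cardRS.
Qed.

Section G.
Variable R : finFieldType.

Lemma ord2P (i : 'I_2) : i = ord0 \/ i = ord_max.
Proof. by case: i => [[|[|//]] hi]; [left|right]; apply: val_inj. Qed.

Definition mk3 (t : R * R * R) : 'M[R]_2 :=
  \matrix_(i < 2, j < 2)
    if (i : nat) == 0%N then (if (j : nat) == 0%N then t.1.1 else t.1.2)
    else (if (j : nat) == 0%N then 0 else t.2).

Lemma mk3_inj : injective mk3.
Proof.
move=> [[x y] z] [[x' y'] z'] /matrixP e.
have e1 := e ord0 ord0; have e2 := e ord0 ord_max; have e3 := e ord_max ord_max.
by move: e1 e2 e3; rewrite !mxE /= => -> -> ->.
Qed.

Lemma upper2_codom A : upper2 A = (A \in codom mk3).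
Proof.
apply/idP/idP.
  move=> /eqP h; apply/codomP; exists (A ord0 ord0, A ord0 ord_max, A ord_max ord_max).
  apply/matrixP => i j; rewrite mxE.
  by case: (ord2P i) => ->; case: (ord2P j) => ->.
case/codomP => t ->; by rewrite /upper2 mxE.
Qed.

Lemma card_upper : #|[pred A : 'M[R]_2 | upper2 A]| = (#|R| * #|R| * #|R|)%N.
Proof.
have -> : #|[pred A : 'M[R]_2 | upper2 A]| = #|codom mk3|.
  by apply: eq_card => A; rewrite inE upper2_codom.
by rewrite card_codom ?card_prod //; apply: mk3_inj.
Qed.

Lemma central_scalar (A : 'M[R]_2) : tr_central A = (A == (A ord0 ord0)%:M).
Proof.
apply/idP/idP.
  case/andP => /eqP h /forallP c.
  have cc (j : 'I_2) : A *m delta_mx ord0 j = delta_mx ord0 j *m A.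
    apply/eqP; apply: (implyP (c _)); by rewrite /upper2 mxE.
  have c1 := cc ord0; have c2 := cc ord_max.
  move: c1 c2 => /matrixP/(_ ord0 ord_max) c1 /matrixP/(_ ord0 ord_max) c2.
  move: c1 c2; rewrite !mxE !big_ord_recl !big_ord0 !mxE /= => c1 c2.
  have lE : lift ord0 ord0 = ord_max :> 'I_2 by apply: val_inj.
  rewrite lE !(mulr0, mul0r, mulr1, mul1r, addr0, add0r) in c1 c2.
  apply/eqP/matrixP => i j; rewrite mxE.
  by case: (ord2P i) => ->; case: (ord2P j) => ->; rewrite /= ?mulr1n ?mulr0n.
move/eqP => ->; rewrite /tr_central /upper2 mxE /= eqxx /=.
by apply/forallP => B; apply/implyP => _; rewrite scalar_mxC.
Qed.

Lemma central_codom (A : 'M[R]_2) : tr_central A = (A \in codom (fun a : R => a%:M)).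
Proof.
rewrite central_scalar; apply/eqP/codomP => [-> | [a ->]].
  by exists (A ord0 ord0).
by rewrite mxE eqxx mulr1n.
Qed.

Lemma card_vert : (#|{: trVert R}| + #|R|)%N = (#|R| * #|R| * #|R|)%N.
Proof.
rewrite card_sig -card_upper.
rewrite -(cardID [pred A : 'M[R]_2 | tr_central A] [pred A : 'M[R]_2 | upper2 A]).
have -> : #|[predD [pred A : 'M[R]_2 | upper2 A] & [pred A | tr_central A]]|
   = #|[pred A : 'M[R]_2 | upper2 A & ~~ tr_central A]|.
  by apply: eq_card => A; rewrite !inE andbC.
rewrite addnC; congr addn.
have -> : #|R| = #|codom (fun a : R => a%:M : 'M[R]_2)|.
  rewrite card_codom // => a b /matrixP/(_ ord0 ord0).
  by rewrite !mxE eqxx !mulr1n.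
apply: eq_card => A; rewrite !inE -central_codom.
by case e: (tr_central A); rewrite ?andbF // andbT; case/andP: e.
Qed.
End G.

Local Open Scope nat_scope.
Lemma cube_inj (q s v w : nat) : 1 < q -> 1 < s -> v + q = q * q * q -> w + s = s * s * s -> v = w -> q = s.
Proof.
move=> hq hs e1 e2 evw.
have key : forall a b : nat, 1 < a -> a < b -> a * a * a + b < b * b * b + a.
  move=> a b ha hab.
  have ab : a <= b by apply: ltnW.
  have h1 : a * a * a <= a * (b * b) by rewrite -mulnA leq_mul2l (leq_mul ab ab) orbT.
  have h2 : (a + 1) * (b * b) <= b * (b * b) by rewrite leq_mul2r addn1 hab orbT.
  have h3 : b < b * b by rewrite -{1}[b]muln1 ltn_mul2l (leq_trans _ hab) //= (ltn_trans _ hab).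
  nia.
case: (ltngtP q s) => // h.
  have := key _ _ hq h; lia.
have := key _ _ hs h; lia.
Qed.
Local Close Scope nat_scope.

Theorem mainTheorem6 (R S : finFieldType) :
  comm_graph_iso R S ->
  exists f : {rmorphism R -> S}, bijective f.
Proof.
case=> f [bf _].
have e : (#|{: trVert R}| = #|{: trVert S}|)%N := bij_eq_card bf.
apply: fin_field_iso.
exact: (cube_inj (finNzRing_gt1 R) (finNzRing_gt1 S) (card_vert R) (card_vert S) e).
Qed.
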